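(* Consider a classical Hamiltonian system on phase space with Liouville measure $\mu$ and Hamiltonian flow $\Gamma\mapsto \Gamma(t)$, whose microscopic dynamics is time-reversal covariant with respect to an involution $\Theta$ ($\Theta^2=1$) that leaves $\mu$ invariant. Let $W(\Gamma)=e^{\Psi(\Gamma)}>0$ be a weight function, let $\langle X\rangle_W=\int X\,W\,d\mu/\int W\,d\mu$ denote weighted expectation, and let $\chi(\Gamma)=W(\Theta\Gamma)/W(\Gamma)$. Let $A_1,\dots,A_n$ be observables with $A_i(\Theta\Gamma)=\varepsilon_i A_i(\Gamma)$, $\varepsilon_i\in\{\pm1\}$, with fluxes $J_i=\dot A_i$ (so that $J_i(\Theta\Gamma)=-\varepsilon_i J_i(\Gamma)$), and define $L_{ij}^{(W)}=\int_0^\infty \langle J_i(0)J_j(t)\rangle_W\,dt$. Then $$L_{ij}^{(W)}-\varepsilon_i\varepsilon_j L_{ji}^{(W)}=\int_0^\infty \big\langle (1-\chi(\Gamma))\,J_i(0)\,J_j(t)\big\rangle_W\,dt .$$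
   Context: Phase-space points are $\Gamma=(q_1,\dots,q_N,p_1,\dots,p_N)$; the dynamics is generated by a Hamiltonian $H(\Gamma;\lambda)$ and $J_i(t)$ denotes $J_i$ evaluated at the time-$t$ evolved point $\Gamma(t)$ starting from $\Gamma$, so $J_i(0)=J_i(\Gamma)$; $J_i=i\mathcal{L}A_i$ with $\mathcal{L}$ the Liouville operator. Time-reversal covariance of the dynamics means that evolving $\Theta\Gamma$ forward by time $t$ equals $\Theta$ applied to $\Gamma$ evolved by time $-t$; in particular $J_j(t,\Theta\Gamma)=-\varepsilon_j J_j(-t,\Gamma)$. In the weighted expectation inside the integral, $\chi$ is evaluated at the initial phase-space point $\Gamma$.
   Formalization: The weight is invariant under the Hamiltonian flow, Ψ(Γ(t)) = Ψ(Γ) for all t and Γ, and the integrals defining the weighted expectations and $L_{ij}^{(W)}$ exist. Apart from conventions, each condition added here is assumed in the paper as well or is needed for the statement above to hold. *)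

(* Defs.v *)
From HB Require Import structures.
From mathcomp Require Import all_boot all_order all_algebra.
From mathcomp Require Import all_classical all_reals all_analysis.

Set Implicit Arguments.
Unset Strict Implicit.
Unset Printing Implicit Defensive.

Import Order.TTheory GRing.Theory Num.Theory.
Import numFieldNormedType.Exports.

Local Open Scope classical_set_scope.
Local Open Scope ring_scope.

Section Defs.
Context {R : realType} {d : measure_display} {T : measurableType d}.

Definition flux (phi : R -> T -> T) (A : T -> R) (x : T) : R :=
  derive1 (fun t : R => A (phi t x)) 0.

Definition wexp (mu : {measure set T -> \bar R}) (W : T -> R) (X : T -> R) : R :=
  (\int[mu]_x (X x * W x)) / (\int[mu]_x W x).

Definition chi (Theta : T -> T) (W : T -> R) (x : T) : R := W (Theta x) / W x.

Definition Lcoef (mu : {measure set T -> \bar R}) (phi : R -> T -> T)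
    (W : T -> R) (Ji Jj : T -> R) : R :=
  \int[lebesgue_measure]_(t in `[0%R, +oo[%classic)
     wexp mu W (fun x => Ji x * Jj (phi t x)).

End Defs.

(* Main.v *)
Require Import Defs.
From HB Require Import structures.
From mathcomp Require Import all_boot all_order all_algebra.
From mathcomp Require Import all_classical all_reals all_analysis.
From mathcomp Require Import measurable_realfun ring.
Import Order.TTheory GRing.Theory Num.Theory.
Import numFieldNormedType.Exports.
Local Open Scope classical_set_scope.
Local Open Scope ring_scope.

Lemma mp_integral (R : realType) (d : measure_display) (T : measurableType d)
  (mu : {measure set T -> \bar R}) (f : T -> T) (mf : measurable_fun setT f)
  (hf : forall B : set T, measurable B -> mu (f @^-1` B) = mu B) (g : T -> R) :
  mu.-integrable setT (EFin \o g) ->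
  mu.-integrable setT (EFin \o (g \o f)) /\ \int[mu]_x g (f x) = \int[mu]_x g x.
Proof.
move=> gi.
have mg := measurable_int mu gi.
have mgR : measurable_fun setT g by apply/measurable_EFinP.
have mgfR : measurable_fun setT (g \o f) by apply: measurableT_comp.
have gfi : mu.-integrable setT (EFin \o (g \o f)).
  apply/integrableP; split; first exact/measurable_EFinP.
  move/integrableP: gi => [_ gi].
  apply: le_lt_trans gi; rewrite le_eqVlt; apply/orP; left; apply/eqP.
  have := @ge0_integral_pushforward _ _ _ _ R f mf mu setT (fun y => `|(g y)%:E|%E) measurableT _ _.
  rewrite preimage_setT => <- //.
  - by apply: eq_measure_integral => A mA _ /=; exact: (hf A mA).
  - by apply: measurableT_comp => //; exact/measurable_EFinP.
split => //.
rewrite /Rintegral; congr fine.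
have := @integral_pushforward _ _ _ _ R f mf mu setT (EFin \o g) mg _ measurableT.
rewrite preimage_setT => <- //.
by apply: eq_measure_integral => A mA _ /=; exact: (hf A mA).
Qed.
Arguments mp_integral {R d T mu f} mf hf {g}.
Lemma flux_rev (R : realType) (d : measure_display) (T : measurableType d)
  (phi : R -> T -> T) (Theta : T -> T) (A : T -> R) (e : R)
  (hTR : forall t x, phi t (Theta x) = Theta (phi (- t) x))
  (hA_par : forall x, A (Theta x) = e * A x)
  (hA_der : forall x, derivable (fun t : R => A (phi t x)) 0 1) x :
  flux phi A (Theta x) = - e * flux phi A x.
Proof.
rewrite /flux.
set h := fun t : R => A (phi t x).
have -> : (fun t => A (phi t (Theta x))) = (fun t => e * (h \o -%R) t).
  by apply/funext => t; rewrite hTR hA_par.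
have dN : derivable (-%R : R -> R) 0 1 by exact: derivable_opp.
have dh : derivable h (- 0) 1 by rewrite oppr0; exact: hA_der.
have dc : derivable (h \o -%R) 0 1.
  apply/derivable1_diffP; apply: differentiable_comp; exact/derivable1_diffP.
rewrite (@derive1Ml R (h \o -%R) 0 e dc).
rewrite (@derive1_comp R -%R h 0 dN dh) oppr0.
have -> : ((-%R : R -> R)^`())%classic 0 = -1.
  rewrite derive1E deriveN; last exact: derivable_id.
  by rewrite derive_id.
by rewrite mulrN1 mulrN mulNr.
Qed.

Theorem mainTheorem1 (R : realType) (d : measure_display) (T : measurableType d)
  (mu : {measure set T -> \bar R})
  (phi : R -> T -> T) (Theta : T -> T) (Psi : T -> R)
  (n : nat) (A : 'I_n -> T -> R) (eps : 'I_n -> R)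
  (hphi_meas : forall t, measurable_fun setT (phi t))
  (hphi0 : forall x, phi 0 x = x)
  (hphiD : forall s t x, phi (s + t) x = phi s (phi t x))
  (hphi_mu : forall t (B : set T), measurable B -> mu (phi t @^-1` B) = mu B)
  (hTheta_meas : measurable_fun setT Theta)
  (hTheta_inv : forall x, Theta (Theta x) = x)
  (hTheta_mu : forall B : set T, measurable B -> mu (Theta @^-1` B) = mu B)
  (hTR : forall t x, phi t (Theta x) = Theta (phi (- t) x))
  (hPsi_meas : measurable_fun setT Psi)
  (hW_int : mu.-integrable setT (fun x => (expR (Psi x))%:E))
  (hW_stat : forall t x, Psi (phi t x) = Psi x)
  (heps : forall i, eps i = 1 \/ eps i = -1)
  (hA_par : forall i x, A i (Theta x) = eps i * A i x)
  (hA_der : forall i x, derivable (fun t : R => A i (phi t x)) 0 1)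
  (hC_int : forall i j t, mu.-integrable setT
     (fun x => (flux phi (A i) x * flux phi (A j) (phi t x) * expR (Psi x))%:E))
  (hL_int : forall i j, lebesgue_measure.-integrable `[0%R, +oo[%classic
     (fun t => (wexp mu (fun x => expR (Psi x))
                  (fun x => flux phi (A i) x * flux phi (A j) (phi t x)))%:E)) :
  forall i j : 'I_n,
    Lcoef mu phi (fun x => expR (Psi x)) (flux phi (A i)) (flux phi (A j))
    - eps i * eps j *
      Lcoef mu phi (fun x => expR (Psi x)) (flux phi (A j)) (flux phi (A i))
    = \int[lebesgue_measure]_(t in `[0%R, +oo[%classic)
        wexp mu (fun x => expR (Psi x))
          (fun x => (1 - chi Theta (fun y => expR (Psi y)) x)
                    * flux phi (A i) x * flux phi (A j) (phi t x)).
Proof.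
move=> i j.
have eps2 : forall k, eps k * eps k = 1.
  by move=> k; case: (heps k) => ->; rewrite ?mulr1 ?mulrNN ?mulr1.
have Jpar : forall k x, flux phi (A k) (Theta x) = - eps k * flux phi (A k) x.
  by move=> k x; apply: flux_rev.
have key : forall t,
    wexp mu (fun x => expR (Psi x))
      (fun x => (1 - chi Theta (fun y => expR (Psi y)) x)
                * flux phi (A i) x * flux phi (A j) (phi t x))
    = wexp mu (fun x => expR (Psi x))
        (fun x => flux phi (A i) x * flux phi (A j) (phi t x))
      - eps i * eps j * wexp mu (fun x => expR (Psi x))
        (fun x => flux phi (A j) x * flux phi (A i) (phi t x)).
  move=> t; rewrite /wexp.
  pose G := fun y => eps i * eps j *
    (flux phi (A i) y * flux phi (A j) (phi (-t) y) * expR (Psi y)).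
  have H := hC_int i j (-t).
  have Gi : mu.-integrable setT (EFin \o G).
    apply: (eq_integrable measurableT _ _ _ (integrableZl measurableT (eps i * eps j) H)) => x _.
    by rewrite /G /= EFinM.
  have [GTi GTe] := mp_integral hTheta_meas hTheta_mu Gi.
  have HGT : forall x, G (Theta x) =
      flux phi (A i) x * flux phi (A j) (phi t x) * expR (Psi (Theta x)).
    move=> x; rewrite /G Jpar hTR opprK Jpar.
    transitivity ((eps i * eps i) * (eps j * eps j) *
      (flux phi (A i) x * flux phi (A j) (phi t x) * expR (Psi (Theta x)))).
      by ring.
    by rewrite !eps2 !mul1r.
  have [Hpi Hpe] := mp_integral (g := fun x =>
     flux phi (A i) x * flux phi (A j) (phi (-t) x) * expR (Psi x))
     (hphi_meas t) (hphi_mu t) H.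
  have num : \int[mu]_x ((1 - chi Theta (fun y => expR (Psi y)) x)
                * flux phi (A i) x * flux phi (A j) (phi t x) * expR (Psi x))
     = \int[mu]_x (flux phi (A i) x * flux phi (A j) (phi t x) * expR (Psi x))
       - (eps i * eps j) *
         (\int[mu]_x (flux phi (A j) x * flux phi (A i) (phi t x) * expR (Psi x))).
    transitivity (\int[mu]_x (flux phi (A i) x * flux phi (A j) (phi t x)
                     * expR (Psi x) - G (Theta x))).
      apply: eq_Rintegral => x _; rewrite HGT /chi.
      have : expR (Psi x) != 0 by apply/negbT/gt_eqF/expR_gt0.
      by move=> ?; field.
    rewrite (@RintegralB _ _ _ mu setT _ _ measurableT (hC_int i j t) GTi).
    congr (_ - _).
    rewrite GTe /G (@RintegralZl _ _ _ mu setT (fun x =>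
     flux phi (A i) x * flux phi (A j) (phi (-t) x) * expR (Psi x)) (eps i * eps j) measurableT H).
    apply: congr1.
    rewrite -Hpe; apply: eq_Rintegral => z _ /=.
    by rewrite -hphiD addNr hphi0 hW_stat; ring.
  by rewrite num mulrBl mulrA.
rewrite /Lcoef.
rewrite -RintegralZl //; last exact: hL_int j i.
rewrite -RintegralB //.
  by apply: eq_Rintegral => t _; rewrite key.

  exact (hL_int i j).
  apply: (eq_integrable _ _ _ _ (integrableZl _ (eps i * eps j) (hL_int j i))) => //.
Qed.
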